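(* Let $p\in[1,\infty]$ and $m,n\in\mathbb N$, and let $$\mathbb H^n_G(m):=\Big\{\frac{\boldsymbol w}{\|\boldsymbol w\|_p}:\boldsymbol w\ne\boldsymbol0,\ w_i\in\{0,\pm\tfrac1m,\pm\tfrac2m,\dots,\pm1\},\ i=1,\dots,n\Big\}.$$ Then $|\mathbb H^n_G(m)|\le(2m+1)^n$, and for any $\boldsymbol x\in\mathbb S^n_p$ there exists $\boldsymbol y\in\mathbb H^n_G(m)$ such that for every $\boldsymbol z\in\mathbb R^n$: if $\boldsymbol y^{\mathrm T}\boldsymbol z\ge0$ then $\boldsymbol y^{\mathrm T}\boldsymbol z-\frac{\|\boldsymbol z\|_1}m\le\boldsymbol x^{\mathrm T}\boldsymbol z\le(1+\frac{n^{1/p}}m)\boldsymbol y^{\mathrm T}\boldsymbol z+\frac{\|\boldsymbol z\|_1}m$; if $\boldsymbol y^{\mathrm T}\boldsymbol z<0$ then $(1+\frac{n^{1/p}}m)\boldsymbol y^{\mathrm T}\boldsymbol z-\frac{\|\boldsymbol z\|_1}m\le\boldsymbol x^{\mathrm T}\boldsymbol z\le\boldsymbol y^{\mathrm T}\boldsymbol z+\frac{\|\boldsymbol z\|_1}m$.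
   Context: $\mathbb S^n_p=\{\boldsymbol x\in\mathbb R^n:\|\boldsymbol x\|_p=1\}$. *)

(* Defs.v *)
From HB Require Import structures.
From mathcomp Require Import all_boot all_order all_algebra.
From mathcomp Require Import all_classical all_reals all_analysis.
Unset Printing Implicit Defensive.
Import Order.TTheory GRing.Theory Num.Theory.
Local Open Scope classical_set_scope.
Local Open Scope ring_scope.

(* Vectors of R^n are functions 'I_n -> R.  The exponent p \in [1, +oo] is an
   extended real (p = +oo gives the max norm). *)
Definition pnorm {R : realType} {n : nat} (p : \bar R) (x : 'I_n -> R) : R :=
  match p with
  | EFin q => (\sum_(i < n) `|x i| `^ q) `^ q^-1
  | _ => \big[Num.max/0]_(i < n) `|x i|
  end.

Definition rootp {R : realType} (p : \bar R) (n : nat) : R :=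
  match p with
  | EFin q => n%:R `^ q^-1
  | _ => 1
  end.

Definition dotv {R : realType} {n : nat} (x y : 'I_n -> R) : R :=
  \sum_(i < n) x i * y i.

Definition sphere {R : realType} (n : nat) (p : \bar R) : set ('I_n -> R) :=
  [set x | pnorm p x = 1].

Definition hgrid {R : realType} (n m : nat) : set ('I_n -> R) :=
  [set w | (exists i, w i != 0) /\
           forall i, exists k : int, (`|k| <= m)%N /\ w i = k%:~R / m%:R].

Definition HG {R : realType} (n : nat) (p : \bar R) (m : nat) : set ('I_n -> R) :=
  (fun w : 'I_n -> R => (fun i => w i / pnorm p w)) @` (hgrid n m).

(* Main.v *)
Require Import Defs.
From HB Require Import structures.
From mathcomp Require Import all_boot all_order all_algebra.
From mathcomp Require Import all_classical all_reals all_analysis.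
From mathcomp Require Import ring lra zify.
Import Order.TTheory GRing.Theory Num.Theory.
Local Open Scope classical_set_scope.
Local Open Scope ring_scope.

Section H.
Context {R : realType}.

Lemma conv_pow (q a b t : R) : 1 <= q -> 0 <= a -> 0 <= b -> 0 <= t -> t <= 1 ->
  (t * a + (1 - t) * b) `^ q <= t * a `^ q + (1 - t) * b `^ q.
Proof.
move=> q1 a0 b0 t0 t1.
by apply: (convex_powR q1 (Itv01 t0 t1)) => //=;
  rewrite ?inE/= ?in_itv/= ?andbT.
Qed.

Lemma powR_invK (q x : R) : 0 < q -> 0 <= x -> (x `^ q) `^ q^-1 = x.
Proof. by move=> q0 x0; rewrite -powRrM mulfV ?gt_eqF // powRr1. Qed.

Lemma powR_Kinv (q x : R) : 0 < q -> 0 <= x -> (x `^ q^-1) `^ q = x.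
Proof. by move=> q0 x0; rewrite -powRrM mulVf ?gt_eqF // powRr1. Qed.

Lemma powR_Vx (q x : R) : 0 < x -> (x^-1) `^ q = (x `^ q)^-1.
Proof.
move=> x0; have h : x `^ q * (x^-1) `^ q = 1.
  by rewrite -powRM ?invr_ge0 ?ltW // mulfV ?gt_eqF // powR1.
apply: (mulIf (_ : x `^ q != 0)); first by rewrite gt_eqF // powR_gt0.
by rewrite mulVf ?gt_eqF ?powR_gt0 // mulrC h.
Qed.

Lemma mink (q : R) n (a : 'I_n -> R) (d : R) : 1 <= q -> (0 < n)%N ->
  (forall i, 0 <= a i) -> 0 < d -> \sum_(i < n) a i `^ q = 1 ->
  \sum_(i < n) (a i + d) `^ q <= (1 + n%:R `^ q^-1 * d) `^ q.
Proof.
move=> q1 n0 a0 d0 S1.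
have q0 : 0 < q by apply: lt_le_trans q1.
set e := n%:R `^ q^-1.
have e0 : 0 < e by rewrite powR_gt0 // ltr0n.
set B := e * d.
have B0 : 0 < B by rewrite mulr_gt0.
set l := (1 + B)^-1.
have l0 : 0 <= l by rewrite invr_ge0 addr_ge0 // ltW.
have l1 : l <= 1 by rewrite invf_le1 ?addr_gt0 // lerDl ltW.
have eq1 : e `^ q = n%:R by rewrite powR_Kinv // ler0n.
have key : forall i, (a i + d) `^ q <=
    (1 + B) `^ q * (l * a i `^ q + (1 - l) * n%:R^-1).
  move=> i.
  have -> : a i + d = (1 + B) * (l * a i + (1 - l) * e^-1).
    rewrite /l /B; field; rewrite ?gt_eqF ?addr_gt0 //.
  have lae : 0 <= l * a i + (1 - l) * e^-1.
    by rewrite addr_ge0 // mulr_ge0 // ?subr_ge0 // invr_ge0 ltW.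
  rewrite powRM //; last by rewrite addr_ge0 // ltW.
  apply: ler_wpM2l; first exact: powR_ge0.
  rewrite -eq1 -powR_Vx //.
  by apply: conv_pow => //; rewrite invr_ge0 ltW.
apply: le_trans (ler_sum _ (fun i _ => key i)) _.
rewrite -mulr_sumr big_split /= -mulr_sumr S1 -mulr_sumr sumr_const card_ord.
have -> : (n%:R : R)^-1 *+ n = 1.
  by rewrite -[LHS]mulr_natr mulVf // pnatr_eq0 -lt0n.
by rewrite !mulr1 subrKC mulr1.
Qed.


Lemma ceil_facts (m : nat) (a : R) : (0 < m)%N -> 0 <= a -> a <= 1 ->
  let K := Num.ceil (m%:R * a) in
  [/\ 0 <= K, K <= m%:Z, a <= K%:~R / m%:R & K%:~R / m%:R <= a + m%:R^-1].
Proof.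
move=> m0 a0 a1 K.
have mR : 0 < (m%:R : R) by rewrite ltr0n.
split.
- by rewrite /K ceil_ge0 (lt_le_trans _ (mulr_ge0 (ler0n _ _) a0)) // ltrN10.
- by rewrite /K ceil_le_int -[X in _ <= X]mulr1 ler_wpM2l // ler0n.
- by rewrite ler_pdivlMr // mulrC /K ceil_ge.
- have h := ceilB1_lt (m%:R * a); rewrite -/K intrB in h.
  rewrite ler_pdivrMr // mulrDl mulVf ?gt_eqF // mulrC; lra.
Qed.

Definition rnd (m : nat) (t : R) : int :=
  (if 0 <= t then 1 else -1) * Num.ceil (m%:R * `|t|).

Lemma rnd_facts (m : nat) (t : R) : (0 < m)%N -> `|t| <= 1 ->
  let v := (rnd m t)%:~R / m%:R in
  [/\ (`|rnd m t| <= m)%N, `|t| <= `|v|, `|v| <= `|t| + m%:R^-1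
    & `|t - v| <= m%:R^-1].
Proof.
move=> m0 t1 v.
have mR : 0 < (m%:R : R) by rewrite ltr0n.
have [K0 Km lo hi] := ceil_facts m `|t| m0 (normr_ge0 t) t1.
set K := Num.ceil _ in K0 Km lo hi.
have Kv : `|v| = K%:~R / m%:R.
  rewrite /v /rnd; case: ifP => _; rewrite ?mul1r ?mulN1r ?rmorphN ?mulNr ?normrN;
  rewrite -/K ger0_norm // divr_ge0 ?ler0z // ltW.
split.
- rewrite /rnd; case: ifP => _; rewrite ?mul1r ?mulN1r ?abszN;
  by rewrite -lez_nat gez0_abs.
- by rewrite Kv.
- by rewrite Kv.
- rewrite /v /rnd; case: ifP => t0; rewrite ?mul1r ?mulN1r ?rmorphN ?mulNr.
  + rewrite -/K; rewrite ger0_norm // in lo hi.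
    rewrite ler0_norm ?subr_le0 //; lra.
  + rewrite -/K; rewrite ltr0_norm ?ltNge ?t0 // in lo hi.
    rewrite opprK ger0_norm; lra.
Qed.

Lemma sphere_facts n (p : \bar R) (x : 'I_n -> R) : (1%:E <= p)%E -> pnorm p x = 1 ->
  [/\ (0 < n)%N, exists i, x i != 0 & forall i, `|x i| <= 1].
Proof.
case: p => [q| |] //; last first.
- move=> _ /= h; split.
  + case: n x h => // x; rewrite big_ord0 => /eqP; by rewrite eq_sym oner_eq0.
  + case: (pselect (exists i, x i != 0)) => // hx.
    have : \big[Num.max/0]_(i < n) `|x i| <= 0.
      apply: bigmax_le => // i _; rewrite normr_le0.
      by apply/negPn/negP => xi; apply: hx; exists i.
    by rewrite h ler10.
  + by move=> i; rewrite -h; apply: le_bigmax.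
rewrite lee_fin => q1 /= h.
have q0 : 0 < q by apply: lt_le_trans q1.
have S1 : \sum_(i < n) `|x i| `^ q = 1.
  by rewrite -[LHS](@powR_Kinv q) ?h ?powR1 // sumr_ge0 // => i _; rewrite powR_ge0.
split.
- case: n x h S1 => // x _; rewrite big_ord0 => /eqP; by rewrite eq_sym oner_eq0.
- case: (pselect (exists i, x i != 0)) => // hx.
  move: S1; rewrite big1 => [/eqP|i _]; first by rewrite eq_sym oner_eq0.
  have /eqP -> : x i == 0 by apply/negPn/negP => xi; apply: hx; exists i.
  by rewrite normr0 powR0 // gt_eqF.
- move=> i; rewrite leNgt; apply/negP => xi1.
  have : 1 < `|x i| `^ q.
    have -> : (1 : R) = 1 `^ q by rewrite powR1.
    by apply: gt0_ltr_powR; rewrite ?nnegrE ?normr_ge0.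
  rewrite ltNge => /negP; apply; rewrite -S1.
  by rewrite (bigD1 i) //= lerDl sumr_ge0 // => j _; rewrite powR_ge0.
Qed.

Lemma powR_mono (q a b : R) : 0 <= q -> 0 <= a -> a <= b -> a `^ q <= b `^ q.
Proof.
move=> q0 a0 ab; apply: ge0_ler_powR => //; rewrite nnegrE //.
exact: le_trans ab.
Qed.

Lemma pnorm_bounds n m (p : \bar R) (x w : 'I_n -> R) : (1%:E <= p)%E -> (0 < m)%N ->
  pnorm p x = 1 -> (forall i, `|x i| <= `|w i| <= `|x i| + m%:R^-1) ->
  1 <= pnorm p w <= 1 + rootp p n / m%:R.
Proof.
move=> hp m0 hx hw.
have [n0 _ x1] := sphere_facts n p x hp hx.
have mR : 0 < (m%:R : R) by rewrite ltr0n.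
move: hp hx; case: p => [q| |] //; last first.
- move=> _ /= h; apply/andP; split.
  + rewrite -h; apply: le_bigmax2 => i _; by have /andP[] := hw i.
  + rewrite /= div1r; apply: bigmax_le => [|i _].
      by rewrite addr_ge0 // invr_ge0 ltW.
    have /andP[_ h2] := hw i; apply: le_trans h2 _; by rewrite lerD2r.
rewrite lee_fin => q1 /= h.
have q0 : 0 < q by apply: lt_le_trans q1.
have S1 : \sum_(i < n) `|x i| `^ q = 1.
  by rewrite -[LHS](@powR_Kinv q) ?h ?powR1 // sumr_ge0 // => i _; rewrite powR_ge0.
have Sge0 : 0 <= \sum_(i < n) `|w i| `^ q by rewrite sumr_ge0 // => i _; rewrite powR_ge0.
apply/andP; split.
- have -> : (1 : R) = 1 `^ q^-1 by rewrite powR1.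
  apply: powR_mono; [by rewrite invr_ge0 ltW | by [] |].
  rewrite -S1; apply: ler_sum => i _; apply: powR_mono; [exact: ltW | by [] |].
  by have /andP[] := hw i.
- have B0 : 0 <= 1 + n%:R `^ q^-1 / m%:R.
    by rewrite addr_ge0 // divr_ge0 ?powR_ge0 // ltW.
  rewrite -[X in _ <= X](@powR_invK q) //.
  apply: powR_mono; [by rewrite invr_ge0 ltW | by [] |].
  apply: le_trans (@mink q n _ m%:R^-1 q1 n0 (fun i => normr_ge0 (x i)) _ S1); last first.
    by rewrite invr_gt0.
  apply: ler_sum => i _; apply: powR_mono; [exact: ltW | by [] |].
  by have /andP[] := hw i.
Qed.

Lemma card_HG n (p : \bar R) m : (0 < m)%N -> (HG n p m #<= `I_((2 * m + 1) ^ n))%card.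
Proof.
move=> m0.
pose T := {ffun 'I_n -> 'I_(2 * m + 1)}.
pose F (f : T) : 'I_n -> R := fun i => (((f i : nat)%:Z - m%:Z)%:~R / m%:R).
pose G (j : 'I_#|T|) := F (enum_val j).
apply: card_le_trans (card_image_le _ _) _.
apply: (@card_le_trans _ _ _ (G @` setT)).
  apply: subset_card_le => w [_ hw].
  have [k hk] := choice hw.
  have kb : forall i, (absz (k i + m%:Z)%R < 2 * m + 1)%N.
    move=> i; have [h1 _] := hk i; lia.
  pose f : T := [ffun i => Ordinal (kb i)].
  exists (enum_rank f) => //; rewrite /G enum_rankK /F /=.
  apply: funext => i; rewrite ffunE /=.
  have [_ ->] := hk i; congr (_ / _); congr (_%:~R).
  have [h1 _] := hk i.
  rewrite gez0_abs ?addrK //; lia.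
apply: card_le_trans (card_image_le _ _) _.
rewrite card_ffun !card_ord.
by have /card_eqPle[_] := @card_II ((2 * m + 1) ^ n).
Qed.

End H.

Theorem lemma4p10 (R : realType) (p : \bar R) (m n : nat) :
  (1%:E <= p)%E -> (0 < m)%N ->
  (HG n p m #<= `I_((2 * m + 1) ^ n))%card /\
  forall x : 'I_n -> R, x \in sphere n p ->
  exists2 y, y \in HG n p m &
    forall z : 'I_n -> R,
      let z1 := \sum_(i < n) `|z i| in
      let c := 1 + rootp p n / m%:R in
      (0 <= dotv y z ->
         dotv y z - z1 / m%:R <= dotv x z <= c * dotv y z + z1 / m%:R) /\
      (dotv y z < 0 ->
         c * dotv y z - z1 / m%:R <= dotv x z <= dotv y z + z1 / m%:R).
Proof.
move=> hp m0; split; first exact: card_HG.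
move=> x; rewrite in_setE /sphere /= => hx.
have [n0 [i0 xi0] x1] := sphere_facts n p x hp hx.
have mR : 0 < (m%:R : R) by rewrite ltr0n.
pose w i : R := (rnd m (x i))%:~R / m%:R.
have hw i : [/\ (`|rnd m (x i)| <= m)%N, `|x i| <= `|w i|, `|w i| <= `|x i| + m%:R^-1
    & `|x i - w i| <= m%:R^-1] by move: (rnd_facts m (x i) m0 (x1 i)) => /=.
have /andP[s1 sc] := pnorm_bounds n m p x w hp m0 hx
  (fun i => let: And4 _ a b _ := hw i in introT andP (conj a b)).
set s := pnorm p w in s1 sc.
have s0 : 0 < s by apply: lt_le_trans s1.
exists (fun i => w i / s).
  rewrite in_setE; exists w => //; split.
    exists i0; rewrite -normr_gt0; have [_ h _ _] := hw i0.
    by apply: lt_le_trans h; rewrite normr_gt0.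
  by move=> i; exists (rnd m (x i)); have [h _ _ _] := hw i.
move=> z /=.
set z1 := \sum_(i < n) `|z i|. set c := 1 + rootp p n / m%:R.
have dy : dotv (fun i => w i / s) z = dotv w z / s.
  by rewrite /dotv mulr_suml; apply: eq_bigr => i _; rewrite mulrAC.
have err : `|dotv x z - dotv w z| <= z1 / m%:R.
  rewrite /dotv -sumrB; apply: le_trans (ler_norm_sum _ _ _) _.
  rewrite /z1 mulr_suml; apply: ler_sum => i _.
  rewrite -mulrBl normrM mulrC ler_wpM2l //; by have [_ _ _ h] := hw i.
rewrite dy; set D := dotv w z in err *; set X := dotv x z in err *; set E := z1 / m%:R in err *.
set Y := D / s.
have DY : D = s * Y by rewrite /Y mulrC mulfVK ?gt_eqF.
rewrite DY in err.
have cs : s <= c by [].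
move: err; rewrite ler_norml => /andP[e1 e2].
split=> hY.
- have h1 : Y <= s * Y by nra.
  have h2 : s * Y <= c * Y by nra.
  apply/andP; split; lra.
- have h1 : s * Y <= Y by nra.
  have h2 : c * Y <= s * Y by nra.
  apply/andP; split; lra.
Qed.
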